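(* Let $s\in S$, $a\in A(s)$, $i\in P$ and $j\in\mathbb N_0$. If $\sum_{p=0}^{i'}\Delta_j(s,a,p)\le 0$ for all $i'\le i$, then $\sum_{p=0}^{i'}\Delta_{j'}(s,a,p)\le 0$ for all $j'\ge j$ and all $i'\le i$.
   Context: Let $(S,A,T,P,R,\Lambda)$ be an asymmetrically-discounted MDP: $S$ finite states, $A(s)$ the nonempty set of actions available at $s$, $p(s'\mid s,a)$ transition probabilities, principals $P=\{0,\dots,n-1\}$, rewards $R:S\times A\times P\to\mathbb Q$, and rational discount factors $\lambda_i\in(0,1)$ with $\lambda_0>\lambda_1>\dots>\lambda_{n-1}$. Define MDPs $\mathcal M_0=\mathcal M$ and, for $k=0,\dots,n-1$, let $V_k:S\to\mathbb R$ be the optimal discounted value function for principal $k$ (reward $R(\cdot,\cdot,k)$, discount $\lambda_k$) in $\mathcal M_k$, and let $\mathcal M_{k+1}$ be $\mathcal M_k$ restricted to actions used by some strategy optimal for principal $k$ in $\mathcal M_k$. For $s\in S$, $a\in A(s)$ and $i\in P$ define $\Delta_0(s,a,i)=R(s,a,i)+\lambda_i\sum_{s'\in S}p(s'\mid s,a)V_i(s')-V_i(s)$, and for $j\in\mathbb N_0$ define $\Delta_j(s,a,i)=\lambda_i^j\,\Delta_0(s,a,i)$. *)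

(* Defs.v *)
From HB Require Import structures.
From mathcomp Require Import all_boot all_order all_algebra.
From mathcomp Require Import boolp classical_sets reals topology normedtype sequences.
Set Implicit Arguments. Unset Strict Implicit. Unset Printing Implicit Defensive.
Import Order.TTheory GRing.Theory Num.Theory numFieldNormedType.Exports.
Local Open Scope ring_scope.
Local Open Scope classical_set_scope.

(* An asymmetrically-discounted MDP with finite state type S, finite action
   type Act (A s : {set Act} = actions available at s), transition
   probabilities trans s a s' = p(s'|s,a), principals 'I_n, rational rewards
   rew s a i and rational discount factors lam i. *)

Section MDP.
Context {R : realType} {S Act : finType}.
Variable trans : S -> Act -> S -> rat.

(* histories: list of past (state, action) pairs, most recent first *)
Definition hist := seq (S * Act).

Definition strategy := hist -> S -> Act -> R.

Definition valid_strategy (B : S -> set Act) (sigma : strategy) : Prop :=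
  forall h s,
    (forall a, 0 <= sigma h s a) /\
    (forall a, ~ B s a -> sigma h s a = 0) /\
    \sum_(a : Act) sigma h s a = 1.

Fixpoint fin_val (r : S -> Act -> rat) (l : rat) (sigma : strategy)
    (T : nat) (h : hist) (s : S) : R :=
  match T with
  | 0 => 0
  | T'.+1 => \sum_(a : Act) sigma h s a *
      (ratr (r s a) + ratr l *
         \sum_(s' : S) ratr (trans s a s') * fin_val r l sigma T' ((s, a) :: h) s')
  end.

Definition strat_value r l sigma (s : S) : R :=
  limn (fun T => fin_val r l sigma T [::] s).

Definition opt_value (B : S -> set Act) r l (s : S) : R :=
  sup [set x | exists sigma, valid_strategy B sigma /\ x = strat_value r l sigma s].

Definition optimal_strategy (B : S -> set Act) r l sigma : Prop :=
  valid_strategy B sigma /\ forall s, strat_value r l sigma s = opt_value B r l s.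

(* probability that history h followed by current state s occurs from s0 *)
Fixpoint hist_prob (sigma : strategy) (s0 : S) (h : hist) (s : S) : R :=
  match h with
  | [::] => (s == s0)%:R
  | (s', a) :: h' => hist_prob sigma s0 h' s' * sigma h' s' a * ratr (trans s' a s)
  end.

Definition used (B : S -> set Act) r l : S -> set Act :=
  fun s a => exists sigma, optimal_strategy B r l sigma /\
    exists s0 h, 0 < hist_prob sigma s0 h s /\ 0 < sigma h s a.

Variables (n : nat) (A : S -> {set Act}) (rew : S -> Act -> 'I_n -> rat)
          (lam : 'I_n -> rat).

Fixpoint allowed (k : nat) : S -> set Act :=
  match k with
  | 0 => fun s a => a \in A s
  | k'.+1 =>
      match (insub k' : option 'I_n) with
      | Some i => used (allowed k') (fun s a => rew s a i) (lam i)
      | None => allowed k'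
      end
  end.

Definition V (i : 'I_n) : S -> R :=
  opt_value (allowed i) (fun s a => rew s a i) (lam i).

Definition Delta0 (s : S) (a : Act) (i : 'I_n) : R :=
  ratr (rew s a i) + ratr (lam i) * \sum_(s' : S) ratr (trans s a s') * V i s'
  - V i s.

Definition Delta (j : nat) (s : S) (a : Act) (i : 'I_n) : R :=
  ratr (lam i) ^+ j * Delta0 s a i.

End MDP.

(* Main.v *)
Require Import Defs.
From HB Require Import structures.
From mathcomp Require Import all_boot all_order all_algebra.
From mathcomp Require Import boolp classical_sets reals.
Import Order.TTheory GRing.Theory Num.Theory.
Local Open Scope ring_scope.

Lemma abel_aux (R : realDomainType) (d w : nat -> R) (m : nat) :
  (forall k, (k <= m)%N -> \sum_(0 <= p < k.+1) d p <= 0) ->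
  (forall k, (k <= m)%N -> 0 <= w k) ->
  (forall k, (k < m)%N -> w k.+1 <= w k) ->
  forall k, (k <= m)%N ->
    \sum_(0 <= p < k.+1) w p * d p <= w k * \sum_(0 <= p < k.+1) d p.
Proof.
move=> Hd Hw Hm; elim=> [|k IH] Hk.
  by rewrite !big_nat1.
rewrite big_nat_recr //= [X in _ <= _ * X]big_nat_recr //=.
have Hk' : (k <= m)%N by apply: ltnW.
apply: le_trans (lerD (IH Hk') (lexx _)) _.
rewrite mulrDr lerD2r.
have := Hd k Hk'; have := Hm k Hk; set Sk := \sum_(0 <= p < k.+1) d p => H1 H2.
by rewrite ler_wnM2r.
Qed.

Lemma sum_ord_nat (R : realDomainType) (n : nat) (F : 'I_n -> R) (i : 'I_n) :
  \sum_(p : 'I_n | (p <= i)%N) F p =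
  \sum_(0 <= k < (i : nat).+1) (if insub k is Some p then F p else 0).
Proof.
rewrite (big_nat_widen _ _ n) ?ltn_ord // big_mkord.
apply: eq_big => [p|p _]; first by rewrite ltnS.
by rewrite valK.
Qed.

Theorem lemma2 (R : realType) (S Act : finType) (n : nat)
  (A : S -> {set Act}) (trans : S -> Act -> S -> rat)
  (rew : S -> Act -> 'I_n -> rat) (lam : 'I_n -> rat)
  (A_nonempty : forall s, A s != finset.set0)
  (trans_ge0 : forall s a s', a \in A s -> 0 <= trans s a s')
  (trans_sum1 : forall s a, a \in A s -> \sum_(s' : S) trans s a s' = 1)
  (lam_gt0 : forall i, 0 < lam i) (lam_lt1 : forall i, lam i < 1)
  (lam_decr : forall i i' : 'I_n, (i < i')%N -> lam i' < lam i)
  (s : S) (a : Act) (Ha : a \in A s) (i : 'I_n) (j : nat) :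
  (forall i' : 'I_n, (i' <= i)%N ->
     \sum_(p : 'I_n | (p <= i')%N) Delta (R := R) trans A rew lam j s a p <= 0) ->
  forall (j' : nat), (j <= j')%N -> forall i' : 'I_n, (i' <= i)%N ->
     \sum_(p : 'I_n | (p <= i')%N) Delta (R := R) trans A rew lam j' s a p <= 0.
Proof.
move=> H j' Hj i' Hi'.
pose d := fun k : nat => if insub k is Some p then Delta (R := R) trans A rew lam j s a p else 0.
pose w := fun k : nat => if insub k is Some p then (ratr (lam p) : R) ^+ (j' - j) else 0.
have E : forall p : 'I_n, Delta (R := R) trans A rew lam j' s a p =
    w p * d p.
  move=> p; rewrite /w /d valK /Delta mulrA -exprD subnK //.
rewrite (eq_bigr _ (fun p _ => E p)) sum_ord_nat.
have Hi : (i < n)%N by apply: ltn_ord.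
have Hd : forall k, (k <= i)%N -> \sum_(0 <= p < k.+1) d p <= 0.
  move=> k Hk.
  have Hkn : (k < n)%N by apply: leq_ltn_trans Hi.
  have := H (Ordinal Hkn) Hk; rewrite sum_ord_nat /=.
  by [].
have Hw : forall k, (k <= i)%N -> 0 <= w k.
  move=> k _; rewrite /w; case: insubP => [p _ _|_] //.
  apply: exprn_ge0; rewrite ler0q; exact: ltW.
have Hm : forall k, (k < i)%N -> w k.+1 <= w k.
  move=> k Hk; rewrite /w.
  have Hkn : (k.+1 < n)%N by apply: leq_ltn_trans Hi.
  have Hkn' : (k < n)%N by apply: ltnW.
  case: insubP => [q _ Hq|]; last by rewrite Hkn.
  case: insubP => [p _ Hp|]; last by rewrite Hkn'.
  apply: lerXn2r.
  - by rewrite nnegrE ler0q ltW.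
  - by rewrite nnegrE ler0q ltW.
  rewrite ler_rat; apply: ltW; apply: lam_decr.
  by rewrite Hq Hp.
have -> : \sum_(0 <= k < (i' : nat).+1)
    (if (insub k : option 'I_n) is Some p then w (val p) * d (val p) else 0) =
    \sum_(0 <= k < (i' : nat).+1) w k * d k.
  apply: eq_bigr => k _; case: insubP => [p _ <-|/negbTE Hk] //.
  by rewrite /w /d insubF // mul0r.
have HA := @abel_aux _ d w i Hd Hw Hm i' Hi'.
apply: (le_trans HA).
exact: (mulr_ge0_le0 (Hw _ Hi') (Hd _ Hi')).
Qed.
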